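(* Let $\mathcal H=(M,n,\mathcal R)$ be a BMS, let $S\subseteq\mathbb R^n$ be a convex set, and let $x_0\in S$. If there exists an $\mathcal H$-closed convex polytope $P$ with $x_0\in P\subseteq S$, then the scheduler has a positional winning strategy from $x_0$ in the schedulability game with safety set $S$; in fact there is a positional strategy under which, against every environment strategy, all visited states lie in $P$ and every chosen time delay is at least a fixed positive constant.
   Context: A multi-mode system is a tuple $\mathcal H=(M,n,\mathcal R)$ with $M$ a finite nonempty set of modes, $n\ge1$ variables, and $\mathcal R:M\to 2^{\mathbb R^n}$ giving nonempty rate sets; it is a BMS if each $\mathcal R(m)$ is a bounded convex polytope. A convex polytope $P\subseteq\mathbb R^n$ is $\mathcal H$-closed if for every vertex $c$ of $P$ there exist a mode $m\in M$ and $\tau>0$ such that $c+t\,r\in P$ for all $r\in\mathcal R(m)$ and all $t\in[0,\tau]$. The schedulability game from $x_0$: in round $i\ge 1$ the scheduler chooses $(m_i,t_i)\in M\times\mathbb R_{>0}$, the environment chooses $r_i\in\mathcal R(m_i)$, and $x_i=x_{i-1}+t_ir_i$. Scheduler strategies map finite histories to timed moves; environment strategies map a finite history and the current timed move $(m,t)$ to a rate in $\mathcal R(m)$; a strategy is positional if it depends only on the last state. A run is $S$-safe if $x_i\in S$ and $x_i+t r_{i+1}\in S$ for all $i\ge0$, $t\in[0,t_{i+1}]$, and non-Zeno if $\sum_it_i=\infty$. A scheduler strategy is winning if every resulting run is $S$-safe and non-Zeno. *)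

(* Defs.v *)
From Stdlib Require Import Reals.
From mathcomp Require Import all_boot.
Set Implicit Arguments. Unset Strict Implicit. Unset Printing Implicit Defensive.

Local Open Scope R_scope.

Definition vec (n : nat) := 'I_n -> R.
Definition vadd n (x y : vec n) : vec n := fun i => x i + y i.
Definition vscale n (a : R) (x : vec n) : vec n := fun i => a * x i.

Definition convex n (S : vec n -> Prop) : Prop :=
  forall x y a, S x -> S y -> 0 <= a <= 1 ->
    S (vadd (vscale a x) (vscale (1 - a) y)).

Definition in_hull n k (v : 'I_k -> vec n) (x : vec n) : Prop :=
  exists w : 'I_k -> R,
    (forall j, 0 <= w j) /\ \big[Rplus/0]_(j < k) w j = 1 /\
    forall i, x i = \big[Rplus/0]_(j < k) (w j * v j i).

Definition polytope n (P : vec n -> Prop) : Prop :=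
  exists k (v : 'I_k -> vec n), (0 < k)%N /\ forall x, P x <-> in_hull v x.

Definition vertex n (P : vec n -> Prop) (c : vec n) : Prop :=
  P c /\ forall x y a, P x -> P y -> 0 < a < 1 ->
    c = vadd (vscale a x) (vscale (1 - a) y) -> x = c /\ y = c.

Definition BMS (M : finType) (n : nat) (Rates : M -> vec n -> Prop) : Prop :=
  (0 < #|M|)%N /\ (1 <= n)%N /\ forall m, polytope (Rates m).

Definition H_closed (M : finType) n (Rates : M -> vec n -> Prop)
  (P : vec n -> Prop) : Prop :=
  polytope P /\
  forall c, vertex P c -> exists m tau, 0 < tau /\
    forall r t, Rates m r -> 0 <= t <= tau -> P (vadd c (vscale t r)).

(* A round of the game: (mode, delay, rate); a history is the list of rounds
   played so far (the initial state x0 being fixed). *)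
Definition round (M : finType) n := (M * R * vec n)%type.
Definition history (M : finType) n := seq (round M n).

Definition pos_strategy (M : finType) n := vec n -> (M * R)%type.
Definition valid_pos_strategy (M : finType) n (sigma : pos_strategy M n) :=
  forall x, 0 < (sigma x).2.

Definition env_strategy (M : finType) n := history M n -> M -> R -> vec n.
Definition valid_env (M : finType) n (Rates : M -> vec n -> Prop)
  (e : env_strategy M n) := forall h m t, Rates m (e h m t).

Definition state (M : finType) n (x0 : vec n) (h : history M n) : vec n :=
  foldl (fun x (rd : round M n) => vadd x (vscale rd.1.2 rd.2)) x0 h.

Fixpoint hist (M : finType) n (x0 : vec n) (sigma : pos_strategy M n)
  (e : env_strategy M n) (i : nat) : history M n :=
  match i with
  | 0 => [::]
  | i'.+1 =>
      let h := hist x0 sigma e i' in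
      let mt := sigma (state x0 h) in
      rcons h (mt.1, mt.2, e h mt.1 mt.2)
  end.

Definition run_state (M : finType) n x0 (sigma : pos_strategy M n) e i : vec n :=
  state x0 (hist x0 sigma e i).
(* round i+1 = (m_{i+1}, t_{i+1}, r_{i+1}) *)
Definition run_round (M : finType) n x0 (sigma : pos_strategy M n) e i : round M n :=
  let h := hist x0 sigma e i in
  let mt := sigma (state x0 h) in (mt.1, mt.2, e h mt.1 mt.2).

Definition safe_run (M : finType) n (S : vec n -> Prop) x0
  (sigma : pos_strategy M n) e : Prop :=
  forall i, S (run_state x0 sigma e i) /\
    forall t, 0 <= t <= (run_round x0 sigma e i).1.2 ->
      S (vadd (run_state x0 sigma e i) (vscale t (run_round x0 sigma e i).2)).

Definition non_zeno (M : finType) n x0 (sigma : pos_strategy M n) e : Prop :=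
  forall B, exists N, B < \big[Rplus/0]_(0 <= i < N) (run_round x0 sigma e i).1.2.

Definition winning_pos (M : finType) n (Rates : M -> vec n -> Prop)
  (S : vec n -> Prop) x0 (sigma : pos_strategy M n) : Prop :=
  valid_pos_strategy sigma /\
  forall e, valid_env Rates e -> safe_run S x0 sigma e /\ non_zeno x0 sigma e.

(* Main.v *)
Require Import Defs.
From Stdlib Require Import Reals.
From mathcomp Require Import all_boot.
From Stdlib Require Import Lra FunctionalExtensionality ClassicalEpsilon Classical.
From HB Require Import structures.
Local Open Scope R_scope.
Set Implicit Arguments.

HB.instance Definition _ := Monoid.isComLaw.Build R 0 Rplus
  (fun a b c => esym (Rplus_assoc a b c)) Rplus_comm Rplus_0_l.
HB.instance Definition _ := Monoid.isMulLaw.Build R 0 Rmult Rmult_0_l Rmult_0_r.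
HB.instance Definition _ := Monoid.isAddLaw.Build R Rmult Rplus Rmult_plus_distr_r Rmult_plus_distr_l.

Notation sumR k F := (\big[Rplus/0]_(zz < k) F zz).

Lemma sumR_le k (f g : 'I_k -> R) : (forall j, f j <= g j) -> sumR k f <= sumR k g.
Proof. move=> H; apply: (big_ind2 (fun a b => a <= b)) => //; [lra | move=> *; lra]. Qed.

Lemma sumR_ge0 k (f : 'I_k -> R) : (forall j, 0 <= f j) -> 0 <= sumR k f.
Proof. move=> H; apply: (big_ind (fun a => 0 <= a)) => //; [lra | move=> *; lra]. Qed.

Lemma sumR_const k c : sumR k (fun _ => c) = INR k * c.
Proof.
elim: k => [|k IH]; first by rewrite big_ord0 /=; ring.
rewrite big_ord_recr /= IH; change (INR k * c + c = INR (S k) * c); rewrite S_INR; ring.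
Qed.

Lemma sumR_scale k a (f : 'I_k -> R) : sumR k (fun j => a * f j) = a * sumR k f.
Proof. by rewrite big_distrr. Qed.

Lemma sumR_add k (f g : 'I_k -> R) : sumR k (fun j => f j + g j) = sumR k f + sumR k g.
Proof. by rewrite big_split. Qed.

Lemma sumR_split k (j : 'I_k) (f : 'I_k -> R) :
  sumR k f = f j + \big[Rplus/0]_(i < k.-1) f (lift j i).
Proof. by rewrite (bigD1_ord j). Qed.
Arguments sumR_split {k}.

Lemma sumR_delta k (j : 'I_k) (f : 'I_k -> R) :
  sumR k (fun i => if i == j then f i else 0) = f j.
Proof.
rewrite (sumR_split j) eqxx big1 ?Rplus_0_r // => i _.
by rewrite eq_sym (negbTE (neq_lift j i)).
Qed.
Arguments sumR_delta {k}.

Lemma sumR_ge0_eq0 k (f : 'I_k -> R) j : (forall j, 0 <= f j) -> sumR k f = 0 -> f j = 0.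
Proof.
move=> H; rewrite (sumR_split j) => E.
have : 0 <= \big[Rplus/0]_(i < k.-1) f (lift j i) by apply: sumR_ge0.
have := H j; lra.
Qed.

Lemma in_hull_self n k (v : 'I_k -> vec n) j : in_hull v (v j).
Proof.
exists (fun i => if i == j then 1 else 0); split; [|split].
- by move=> i; case: eqP => _; lra.
- exact: (sumR_delta j (fun _ => 1)).
- move=> l; rewrite -(sumR_delta j (fun i => v i l)).
  by apply: eq_bigr => i _; case: eqP => _; ring.
Qed.

Lemma hull_weight_le1 n k (v : 'I_k -> vec n) (w : 'I_k -> R) j :
  (forall j, 0 <= w j) -> sumR k w = 1 -> w j <= 1.
Proof.
move=> H0 H1; move: H1; rewrite (sumR_split j) => E.
have : 0 <= \big[Rplus/0]_(i < k.-1) w (lift j i) by apply: sumR_ge0.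
lra.
Qed.

Lemma weight1_eq n k (v : 'I_k -> vec n) (w : 'I_k -> R) j x :
  (forall j, 0 <= w j) -> sumR k w = 1 -> (forall i, x i = sumR k (fun z => w z * v z i)) ->
  w j = 1 -> x = v j.
Proof.
move=> H0 H1 Hx Hj.
have Z : forall i, w (lift j i) = 0.
  move=> i; apply: (@sumR_ge0_eq0 k.-1 (fun i => w (lift j i)) i) => //.
  move: H1; rewrite (sumR_split j); lra.
apply: functional_extensionality => l; rewrite Hx (sumR_split j) Hj big1 ?Rplus_0_r.
  by ring.
by move=> i _; rewrite Z; ring.
Qed.

Lemma nonvertex_rep n k (P : vec n -> Prop) (v : 'I_k -> vec n) j :
  (forall x, P x <-> in_hull v x) -> ~ vertex P (v j) ->
  exists mu : 'I_k.-1 -> R, (forall i, 0 <= mu i) /\ sumR k.-1 mu = 1 /\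
    forall l, v j l = sumR k.-1 (fun i => mu i * v (lift j i) l).
Proof.
move=> HP Hnv.
have [x [y [a [Px [Py [Ha [Ec Hne]]]]]]] : exists x y a, P x /\ P y /\ 0 < a < 1 /\
    v j = vadd (vscale a x) (vscale (1 - a) y) /\ ~ (x = v j /\ y = v j).
  apply: NNPP => H; apply: Hnv; split; first by apply/HP/in_hull_self.
  move=> x y a Px Py Ha E; apply: NNPP => Hn; apply: H.
  by exists x, y, a.
have [al [al0 [al1 alx]]] := proj1 (HP x) Px.
have [be [be0 [be1 bey]]] := proj1 (HP y) Py.
set mu := fun i => a * al i + (1 - a) * be i.
have mu0 : forall i, 0 <= mu i.
  move=> i; rewrite /mu; have := al0 i; have := be0 i; nra.
have mu1 : sumR k mu = 1.
  by rewrite /mu sumR_add !sumR_scale al1 be1; ring.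
have murep : forall l, v j l = sumR k (fun i => mu i * v i l).
  move=> l; have -> : v j l = vadd (vscale a x) (vscale (1 - a) y) l by rewrite -Ec.
  rewrite /vadd /vscale alx bey -!sumR_scale -sumR_add.
  by apply: eq_bigr => i _; rewrite /mu; ring.
have mulj : mu j < 1.
  have a1 := @hull_weight_le1 n k v al j al0 al1.
  have b1 := @hull_weight_le1 n k v be j be0 be1.
  have := al0 j; have := be0 j.
  case: (Rlt_le_dec (mu j) 1) => // Hge _ _; exfalso; apply: Hne.
  have Ha1 : al j = 1 by rewrite /mu in Hge; nra.
  have Hb1 : be j = 1 by rewrite /mu in Hge; nra.
  split; [exact: (@weight1_eq n k v al j x al0 al1 alx Ha1) | exact: (@weight1_eq n k v be j y be0 be1 bey Hb1)].
exists (fun i => / (1 - mu j) * mu (lift j i)); split; [|split].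
- move=> i; apply: Rmult_le_pos; [apply: Rlt_le; apply: Rinv_0_lt_compat; lra | exact: mu0].
- rewrite sumR_scale; move: mu1; rewrite (sumR_split j) => E.
  have -> : \big[Rplus/0]_(i < k.-1) mu (lift j i) = 1 - mu j by lra.
  field; lra.
- move=> l; have E := murep l; rewrite (sumR_split j) in E.
  rewrite (eq_bigr (fun i => / (1 - mu j) * (mu (lift j i) * v (lift j i) l))); last first.
    by move=> i _; ring.
  rewrite sumR_scale.
  have -> : \big[Rplus/0]_(i < k.-1) (mu (lift j i) * v (lift j i) l) = (1 - mu j) * v j l.
    lra.
  field; lra.
Qed.

Lemma drop_gen n k (P : vec n -> Prop) (v : 'I_k -> vec n) j :
  (forall x, P x <-> in_hull v x) -> ~ vertex P (v j) ->
  forall x, P x <-> in_hull (fun i : 'I_k.-1 => v (lift j i)) x.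
Proof.
move=> HP Hnv; have [mu [mu0 [mu1 murep]]] := @nonvertex_rep n k P v j HP Hnv.
move=> x; rewrite HP; split.
- move=> [w [w0 [w1 wx]]].
  exists (fun i => w (lift j i) + w j * mu i); split; [|split].
  + move=> i; have := w0 (lift j i); have := w0 j; have := mu0 i; nra.
  + rewrite sumR_add sumR_scale mu1; move: w1; rewrite (sumR_split j); lra.
  + move=> l; rewrite wx (sumR_split j).
    have -> : \big[Rplus/0]_(i < k.-1) ((w (lift j i) + w j * mu i) * v (lift j i) l) =
      \big[Rplus/0]_(i < k.-1) (w (lift j i) * v (lift j i) l) +
      w j * \big[Rplus/0]_(i < k.-1) (mu i * v (lift j i) l).
      by rewrite -sumR_scale -sumR_add; apply: eq_bigr => i _; ring.
    rewrite -murep; ring.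
- move=> [w [w0 [w1 wx]]].
  exists (fun i => if unlift j i is Some i' then w i' else 0); split; [|split].
  + by move=> i; case: (unlift j i) => [i'|]; [apply: w0 | lra].
  + rewrite (sumR_split j) unlift_none Rplus_0_l -w1.
    by apply: eq_bigr => i _; rewrite liftK.
  + move=> l; rewrite wx (sumR_split j) unlift_none Rmult_0_l Rplus_0_l.
    by apply: eq_bigr => i _; rewrite liftK.
Qed.

Lemma KM n (P : vec n -> Prop) k (v : 'I_k -> vec n) :
  (0 < k)%N -> (forall x, P x <-> in_hull v x) ->
  exists k' (v' : 'I_k' -> vec n), (0 < k')%N /\ (forall x, P x <-> in_hull v' x) /\
    forall j, vertex P (v' j).
Proof.
elim: k v => [|k IH] v Hk HP; first by [].
case: (classic (forall j, vertex P (v j))) => Hall; first by exists k.+1, v.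
have [j Hj] := not_all_ex_not _ _ Hall.
case: k IH v Hk HP j Hj Hall => [|k] IH v Hk HP j Hj Hall.
  exfalso; apply: Hj; split; first by apply/HP/in_hull_self.
  have E : forall z, P z -> z = v j.
    move=> z /HP [w [w0 [w1 wz]]]; apply: (@weight1_eq n 1 v w j z w0 w1 wz).
    by move: w1; rewrite big_ord1 (ord1 j).
  by move=> x y a /E -> /E ->.
exact: (IH (fun i : 'I_k.+1 => v (lift j i)) isT (@drop_gen n k.+2 P v j HP Hj)).
Qed.

Lemma my_choice (A B : Type) (Rel : A -> B -> Prop) :
  (forall a, exists b, Rel a b) -> exists f : A -> B, forall a, Rel a (f a).
Proof.
move=> H; exists (fun a => proj1_sig (constructive_indefinite_description _ (H a))).
by move=> a; case: (constructive_indefinite_description _ (H a)).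
Qed.

Lemma sumR_drop k (j : 'I_k) (f : 'I_k -> R) :
  sumR k (fun i => if i == j then 0 else f i) = sumR k f - f j.
Proof.
rewrite -(sumR_delta j f).
have -> : sumR k f = sumR k (fun i => (if i == j then 0 else f i) + (if i == j then f i else 0)).
  by apply: eq_bigr => i _; case: eqP => _; ring.
rewrite sumR_add; ring.
Qed.

Lemma exists_big_weight k (w : 'I_k -> R) : (0 < k)%N -> sumR k w = 1 ->
  exists j, / INR k <= w j.
Proof.
move=> Hk Hs; apply: NNPP => H.
have Hlt : forall j, w j < / INR k.
  by move=> j; apply: Rnot_le_lt => Hj; apply: H; exists j.
have HkR : 0 < INR k by apply: lt_0_INR; apply/ltP.
set j0 := Ordinal Hk.
have E : sumR k (fun _ => / INR k) = 1 by rewrite sumR_const; field; lra.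
move: Hs E; rewrite (sumR_split j0) (sumR_split j0 (fun _ => / INR k)) => Hs E.
have : \big[Rplus/0]_(i < k.-1) w (lift j0 i) <= \big[Rplus/0]_(i < k.-1) / INR k.
  by apply: (@sumR_le k.-1 (fun i => w (lift j0 i)) (fun _ => / INR k)) => i; apply: Rlt_le.
have := Hlt j0; lra.
Qed.

Lemma fin_min k (f : 'I_k -> R) : (forall j, 0 < f j) ->
  exists d, 0 < d /\ forall j, d <= f j.
Proof.
move=> Hf; set s := sumR k (fun j => / f j).
have Hs : forall j, / f j <= s.
  move=> j; rewrite /s (sumR_split j).
  have : 0 <= \big[Rplus/0]_(i < k.-1) / f (lift j i).
    by apply: (@sumR_ge0 k.-1 (fun i => / f (lift j i))) => i; apply: Rlt_le; apply: Rinv_0_lt_compat.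
  lra.
have s0 : 0 <= s by apply: sumR_ge0 => j; apply: Rlt_le; apply: Rinv_0_lt_compat.
exists (/ (1 + s)); split; first by apply: Rinv_0_lt_compat; lra.
move=> j; rewrite -(Rinv_inv (f j)); apply: Rinv_le_contravar.
  by apply: Rinv_0_lt_compat.
have := Hs j; lra.
Qed.

Lemma step (M : finType) n (Rates : M -> vec n -> Prop) (P : vec n -> Prop)
  k (v : 'I_k -> vec n) :
  (0 < k)%N -> (forall x, P x <-> in_hull v x) -> (forall j, vertex P (v j)) ->
  H_closed Rates P ->
  exists delta, 0 < delta /\ forall x, P x -> exists m t, delta <= t /\
    forall r s, Rates m r -> 0 <= s <= t -> P (vadd x (vscale s r)).
Proof.
move=> Hk HP Hv [_ HC].
have Hex : forall j : 'I_k, exists p : M * R, 0 < p.2 /\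
    forall r t, Rates p.1 r -> 0 <= t <= p.2 -> P (vadd (v j) (vscale t r)).
  move=> j; have [m [tau [Ht H]]] := HC _ (Hv j).
  by exists (m, tau).
have [f Hf] := @my_choice _ _ _ Hex.
have [d [d0 Hd]] := @fin_min k (fun j => (f j).2) (fun j => proj1 (Hf j)).
have HkR : 0 < INR k by apply: lt_0_INR; apply/ltP.
exists (d * / INR k); split.
  by apply: Rmult_lt_0_compat => //; apply: Rinv_0_lt_compat.
move=> x Px; have [w [w0 [w1 wx]]] := proj1 (HP x) Px.
have [j Hj] := @exists_big_weight k w Hk w1.
have ik0 : 0 < / INR k by apply: Rinv_0_lt_compat.
have wj0 : 0 < w j by lra.
have [tau0 Htau] := Hf j.
exists (f j).1, (w j * (f j).2); split.
  have := Hd j; nra.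
move=> r s Hr Hs.
have Pc : P (vadd (v j) (vscale (s / w j) r)).
  apply: Htau => //; split.
    apply: Rmult_le_pos; first lra. by apply: Rlt_le; apply: Rinv_0_lt_compat.
  apply: (Rmult_le_reg_l (w j)) => //.
  have -> : w j * (s / w j) = s by field; lra.
  lra.
have [be [be0 [be1 bec]]] := proj1 (HP _) Pc.
apply/HP; exists (fun i => (if i == j then 0 else w i) + w j * be i); split; [|split].
- move=> i; have := be0 i; have := w0 i.
  case: eqP => _; nra.
- by rewrite sumR_add sumR_scale sumR_drop w1 be1; ring.
- move=> l; rewrite /vadd /vscale.
  have -> : sumR k (fun i => ((if i == j then 0 else w i) + w j * be i) * v i l) =
     sumR k (fun i => if i == j then 0 else w i * v i l) + w j * sumR k (fun i => be i * v i l).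
    rewrite -sumR_scale -sumR_add; apply: eq_bigr => i _; case: eqP => _; ring.
  rewrite sumR_drop -bec -wx /vadd /vscale; field; lra.
Qed.

Lemma sum_nat_ge N (f : nat -> R) d : (forall i, d <= f i) ->
  INR N * d <= \big[Rplus/0]_(0 <= i < N) f i.
Proof.
move=> H; elim: N => [|N IH]; first by rewrite big_geq //=; lra.
rewrite big_nat_recr //; change (INR (S N) * d <= \big[Rplus/0]_(0 <= i < N) f i + f N).
rewrite S_INR; have := H N; lra.
Qed.

Theorem proposition1 (M : finType) (n : nat) (Rates : M -> vec n -> Prop)
  (S : vec n -> Prop) (x0 : vec n) (P : vec n -> Prop) :
  BMS Rates -> convex S -> S x0 ->
  H_closed Rates P -> P x0 -> (forall x, P x -> S x) ->
  exists sigma : pos_strategy M n,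
    winning_pos Rates S x0 sigma /\
    exists delta : R, 0 < delta /\
      forall e, valid_env Rates e ->
        forall i, P (run_state x0 sigma e i) /\
                  delta <= (run_round x0 sigma e i).1.2.
Proof.
move=> _ _ _ HC Px0 PS.
have [[k [v [Hk HP]]] _] := HC.
have [k' [v' [Hk' [HP' Hv']]]] := @KM n P k v Hk HP.
have [delta [d0 Hstep]] := @step M n Rates P k' v' Hk' HP' Hv' HC.
have [m0 _] := Hstep x0 Px0.
have Hex : forall x : vec n, exists mt : M * R, 0 < mt.2 /\
    (P x -> delta <= mt.2 /\ forall r s, Rates mt.1 r -> 0 <= s <= mt.2 ->
       P (vadd x (vscale s r))).
  move=> x; case: (classic (P x)) => Px.
    have [m [t [Ht H]]] := Hstep x Px.
    exists (m, t); split => //=; lra.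
  by exists (m0, 1); split => //=; lra.
have [sigma Hs] := @my_choice _ _ _ Hex.
have inv : forall e, valid_env Rates e -> forall i, P (run_state x0 sigma e i).
  move=> e He; elim => [|i IH] //.
  rewrite /run_state /= /state foldl_rcons -/(state x0 _).
  have [_ H] := Hs (state x0 (hist x0 sigma e i)).
  have [_ H2] := H IH.
  apply: H2; first exact: He.
  have := proj1 (Hs (state x0 (hist x0 sigma e i))); simpl; lra.
exists sigma; split; last first.
  exists delta; split => // e He i; split; first exact: inv.
  exact: (proj1 ((proj2 (Hs _)) (inv e He i))).
split; first by move=> x; exact: (proj1 (Hs x)).
move=> e He; split.
  move=> i; split; first exact/PS/inv.
  move=> t Ht; apply: PS.
  have [_ H2] := (proj2 (Hs _)) (inv e He i).
  exact: H2 (He _ _ _) Ht.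
move=> B; have [N HN] := INR_unbounded (B / delta).
exists N.
have Hge := @sum_nat_ge N (fun i => (run_round x0 sigma e i).1.2) delta
  (fun i => proj1 ((proj2 (Hs _)) (inv e He i))).
have : B < INR N * delta.
  have -> : B = (B / delta) * delta by field; lra.
  apply: Rmult_lt_compat_r => //; lra.
lra.
Qed.
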